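(* Let $1 \le s \le r$ be fixed integers and $n \ge r$. Define $\theta = \binom{n-s}{r-s}\big/\binom{n}{r}$ and $\psi = \dfrac{r^r\, n^{-(s+2)}}{(\max\{r-2s,0\})!}$. Then for any sequence of nonnegative integers $k = k_n$ with $k = O(n^s\log n)$, as $n \to \infty$, \[ (1 - 2\theta + \psi)^k = (1-\theta)^{2k}\left(1 + O\!\left(\frac{\log n}{n^{\min\{2,s\}}}\right)\right). \] *)

(* Defs.v *)
From Stdlib Require Export Reals Arith Factorial.
Open Scope R_scope.

(* Real binomial coefficient from Stdlib's Binomial.v:
   C n k = INR (fact n) / (INR (fact k) * INR (fact (n - k))). *)

Definition theta (s r n : nat) : R :=
  C (n - s) (r - s) / C n r.

(* psi = r^r * n^{-(s+2)} / (max(r-2s,0))!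
   (nat subtraction r - 2*s is truncated, i.e. equals max(r-2s,0)). *)
Definition psi (s r n : nat) : R :=
  (INR r ^ r / INR n ^ (s + 2)) / INR (fact (r - 2 * s)).

(* Main.v *)
Require Import Defs.
From Stdlib Require Import Reals.
From Stdlib Require Import Lra Lia.
Open Scope R_scope.

Lemma pow_err (x : R) (k : nat) :
  Rabs ((1 + x) ^ k - 1) <= INR k * Rabs x * (1 + Rabs x) ^ k.
Proof.
  induction k as [|k IH].
  - simpl. replace (1 - 1) with 0 by ring. rewrite Rabs_R0. lra.
  - replace ((1 + x) ^ S k - 1) with ((1 + x) * ((1 + x) ^ k - 1) + x)
      by (change ((1 + x) ^ S k) with ((1 + x) * (1 + x) ^ k); ring).
    rewrite S_INR.
    set (a := Rabs x) in *.
    set (q := (1 + a) ^ k) in *.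
    assert (Ha : 0 <= a) by apply Rabs_pos.
    assert (Hq : 1 <= q) by (apply pow_R1_Rle; lra).
    assert (Hk : 0 <= INR k) by apply pos_INR.
    replace ((1 + a) ^ S k) with ((1 + a) * q) by reflexivity.
    eapply Rle_trans; [apply Rabs_triang|].
    rewrite Rabs_mult.
    assert (H1 : Rabs (1 + x) <= 1 + a).
    { eapply Rle_trans; [apply Rabs_triang|]. rewrite Rabs_R1. unfold a; lra. }
    assert (H2 : 0 <= Rabs ((1 + x) ^ k - 1)) by apply Rabs_pos.
    assert (H3 : Rabs (1 + x) * Rabs ((1 + x) ^ k - 1) <= (1 + a) * (INR k * a * q)).
    { apply Rmult_le_compat; auto using Rabs_pos. }
    fold a.
    assert (0 <= INR k * a * q) by (apply Rmult_le_pos; [apply Rmult_le_pos|]; lra).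
    nra.
Qed.

Lemma pow_exp (y : R) (k : nat) : 0 <= y -> (1 + y) ^ k <= exp (INR k * y).
Proof.
  intros Hy. induction k as [|k IH].
  - simpl. rewrite Rmult_0_l, exp_0. lra.
  - rewrite S_INR. replace ((INR k + 1) * y) with (y + INR k * y) by ring.
    rewrite exp_plus. simpl.
    apply Rmult_le_compat; try lra.
    + apply pow_le; lra.
    + apply exp_ineq1_le.
Qed.

Lemma fact_ge (m s : nat) : (fact m * (m + 1) ^ s <= fact (m + s))%nat.
Proof.
  induction s as [|s IH].
  - simpl. rewrite Nat.add_0_r. lia.
  - replace (m + S s)%nat with (S (m + s)) by lia. rewrite (fact_simpl (m + s)). simpl Nat.pow.
    assert (H : (m + 1 <= S (m + s))%nat) by lia.
    replace (fact m * ((m + 1) * (m + 1) ^ s))%nat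
      with ((m + 1) * (fact m * (m + 1) ^ s))%nat by ring.
    apply Nat.mul_le_mono; assumption.
Qed.

Lemma fact_bound (n s : nat) : (1 <= s)%nat -> (s <= n)%nat ->
  (fact (n - s) * n ^ s <= s ^ s * fact n)%nat.
Proof.
  intros H1 H2.
  set (m := (n - s)%nat).
  assert (Hn : n = (m + s)%nat) by (unfold m; lia).
  change (fact (n - s)) with (fact m).
  rewrite Hn.
  assert (Hp : ((m + s) ^ s <= ((m + 1) * s) ^ s)%nat)
    by (apply Nat.pow_le_mono_l; nia).
  rewrite Nat.pow_mul_l in Hp.
  pose proof (fact_ge m s) as Hf.
  apply Nat.le_trans with (fact m * ((m + 1) ^ s * s ^ s))%nat.
  - apply Nat.mul_le_mono_l. exact Hp.
  - rewrite Nat.mul_assoc, (Nat.mul_comm (s ^ s)).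
    apply Nat.mul_le_mono_r. exact Hf.
Qed.

Lemma theta_bound (s r n : nat) : (1 <= s)%nat -> (s <= r)%nat -> (r <= n)%nat ->
  0 <= theta s r n /\
  theta s r n * INR n ^ s <= INR (fact r) * INR s ^ s / INR (fact (r - s)).
Proof.
  intros H1 H2 H3.
  assert (E : theta s r n =
    INR (fact (n - s)) * INR (fact r) / (INR (fact (r - s)) * INR (fact n))).
  { unfold theta, C.
    replace (n - s - (r - s))%nat with (n - r)%nat by lia.
    field. repeat split; apply INR_fact_neq_0. }
  pose proof (INR_fact_lt_0 (n - s)).
  pose proof (INR_fact_lt_0 r).
  pose proof (INR_fact_lt_0 (r - s)).
  pose proof (INR_fact_lt_0 n).
  rewrite E. split.
  - apply Rlt_le. apply Rdiv_lt_0_compat; apply Rmult_lt_0_compat; auto.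
  - pose proof (le_INR _ _ (fact_bound n s H1 (Nat.le_trans _ _ _ H2 H3))) as Hb.
    rewrite !mult_INR, !pow_INR in Hb.
    replace (INR (fact (n - s)) * INR (fact r) / (INR (fact (r - s)) * INR (fact n)) * INR n ^ s)
      with ((INR (fact (n - s)) * INR n ^ s) * (INR (fact r) / (INR (fact (r - s)) * INR (fact n))))
      by (field; lra).
    replace (INR (fact r) * INR s ^ s / INR (fact (r - s)))
      with ((INR s ^ s * INR (fact n)) * (INR (fact r) / (INR (fact (r - s)) * INR (fact n))))
      by (field; lra).
    apply Rmult_le_compat_r; [|exact Hb].
    apply Rlt_le. apply Rdiv_lt_0_compat; [|apply Rmult_lt_0_compat]; auto.
Qed.

Lemma ln_nonneg (x : R) : 1 <= x -> 0 <= ln x.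
Proof.
  intros H. destruct (Req_dec x 1) as [->|Hne].
  - rewrite ln_1. lra.
  - rewrite <- ln_1. left. apply ln_increasing; lra.
Qed.

Lemma ln_sqrt_bound (x : R) : 0 < x -> ln x <= 2 * sqrt x.
Proof.
  intros H.
  assert (Hs : 0 < sqrt x) by (apply sqrt_lt_R0; lra).
  rewrite <- (sqrt_sqrt x) at 1 by lra.
  rewrite ln_mult by lra.
  pose proof (exp_ineq1_le (ln (sqrt x))) as He.
  rewrite exp_ln in He by lra. lra.
Qed.

Theorem corollary1 (s r : nat) (k : nat -> nat) :
  (1 <= s)%nat -> (s <= r)%nat ->
  (exists (C0 : R) (N0 : nat), forall n : nat, (N0 <= n)%nat ->
      INR (k n) <= C0 * (INR n ^ s * ln (INR n))) ->
  exists (C1 : R) (N1 : nat), forall n : nat, (N1 <= n)%nat -> (r <= n)%nat ->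
    exists e : R,
      Rabs e <= C1 * (ln (INR n) / INR n ^ (Nat.min 2 s)) /\
      (1 - 2 * theta s r n + psi s r n) ^ (k n)
        = (1 - theta s r n) ^ (2 * k n) * (1 + e).
Proof.
  intros Hs Hsr [C0 [N0 HC0]].
  set (m := Nat.min 2 s).
  assert (Hm1 : (1 <= m)%nat) by (unfold m; lia).
  assert (Hm2 : (m <= 2)%nat) by (unfold m; lia).
  assert (Hms : (m <= s)%nat) by (unfold m; lia).
  set (A := INR (fact r) * INR s ^ s / INR (fact (r - s))).
  assert (HA : 0 <= A).
  { unfold A. apply Rmult_le_pos.
    - apply Rmult_le_pos; [left; apply INR_fact_lt_0| apply pow_le, pos_INR].
    - left. apply Rinv_0_lt_compat, INR_fact_lt_0. }
  set (P := INR r ^ r).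
  assert (HP : 0 <= P) by (apply pow_le, pos_INR).
  set (D := 4 * (P + A ^ 2)).
  set (K := (Rabs C0 + 1) * D).
  assert (HD : 0 <= D) by (unfold D; nra).
  assert (HK : 0 <= K) by (unfold K; pose proof (Rabs_pos C0); nra).
  destruct (INR_archimed 1 (2 * A)) as [N2 HN2]; [lra|].
  destruct (INR_archimed 1 ((2 * K) ^ 2)) as [N3 HN3]; [lra|].
  exists (3 * K), (N0 + N2 + N3 + 1)%nat.
  intros n Hn Hrn.
  set (X := INR n).
  assert (HX1 : 1 <= X).
  { unfold X. replace 1 with (INR 1) by reflexivity. apply le_INR; lia. }
  assert (HX2 : 2 * A < X).
  { unfold X. apply Rlt_le_trans with (INR N2); [lra|]. apply le_INR; lia. }
  assert (HX3 : (2 * K) ^ 2 < X).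
  { unfold X. apply Rlt_le_trans with (INR N3); [lra|]. apply le_INR; lia. }
  destruct (theta_bound s r n Hs Hsr Hrn) as [Ht0 HtA].
  fold A X in HtA.
  set (t := theta s r n) in *.
  set (p := psi s r n).
  assert (HXs : X <= X ^ s).
  { replace X with (X ^ 1) at 1 by ring. apply Rle_pow; lia || lra. }
  assert (Ht2 : t <= / 2).
  { assert (t * X <= t * X ^ s) by (apply Rmult_le_compat_l; lra). nra. }
  assert (Hp0 : 0 <= p /\ p * X ^ (s + 2) <= P).
  { unfold p, psi. fold X P.
    pose proof (INR_fact_lt_0 (r - 2 * s)) as Hf.
    assert (Hf1 : 1 <= INR (fact (r - 2 * s))).
    { replace 1 with (INR 1) by reflexivity. apply le_INR.
      pose proof (lt_O_fact (r - 2 * s)). lia. }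
    assert (HXp : 0 < X ^ (s + 2)) by (apply pow_lt; lra).
    split.
    - unfold Rdiv. apply Rmult_le_pos.
      + apply Rmult_le_pos; [exact HP| left; apply Rinv_0_lt_compat; exact HXp].
      + left; apply Rinv_0_lt_compat; lra.
    - replace (P / X ^ (s + 2) / INR (fact (r - 2 * s)) * X ^ (s + 2))
        with (P / INR (fact (r - 2 * s))) by (field; lra).
      unfold Rdiv. rewrite <- (Rmult_1_r P) at 2.
      apply Rmult_le_compat_l; [exact HP|].
      rewrite <- Rinv_1. apply Rinv_le_contravar; lra. }
  destruct Hp0 as [Hp0 HpP].
  assert (Hne : 1 - t <> 0) by lra.
  set (d := (p - t ^ 2) / (1 - t) ^ 2).
  exists ((1 + d) ^ (k n) - 1).
  split.
  2:{ assert (E : 1 - 2 * t + p = (1 - t) ^ 2 * (1 + d)) by (unfold d; field; exact Hne).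
      rewrite E, Rpow_mult_distr, pow_mult. ring. }
  assert (HXm : 0 < X ^ m) by (apply pow_lt; lra).
  assert (HXsm : 0 < X ^ (s + m)) by (apply pow_lt; lra).
  assert (Hd : Rabs d * X ^ (s + m) <= D).
  { assert (Hpt : Rabs (p - t ^ 2) <= p + t ^ 2).
    { apply Rabs_le. nra. }
    assert (E1 : Rabs d * (1 - t) ^ 2 = Rabs (p - t ^ 2)).
    { rewrite <- (Rabs_right ((1 - t) ^ 2)) by nra.
      rewrite <- Rabs_mult. f_equal. unfold d. field. exact Hne. }
    assert (Hpp : p * X ^ (s + m) <= P).
    { eapply Rle_trans; [|exact HpP]. apply Rmult_le_compat_l; [lra|].
      apply Rle_pow; [lra|lia]. }
    assert (Htt : t ^ 2 * X ^ (s + m) <= A ^ 2).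
    { assert (X ^ (s + m) <= X ^ (s + s)) by (apply Rle_pow; [lra|lia]).
      rewrite (pow_add X s s) in H.
      assert (0 <= t * X ^ s) by (apply Rmult_le_pos; [lra| apply pow_le; lra]).
      assert (t ^ 2 * X ^ (s + m) <= t ^ 2 * (X ^ s * X ^ s))
        by (apply Rmult_le_compat_l; [nra|exact H]).
      nra. }
    assert (Hq : / 4 <= (1 - t) ^ 2) by nra.
    assert (0 <= Rabs d * X ^ (s + m)) by (apply Rmult_le_pos; [apply Rabs_pos|lra]).
    assert (Rabs d * X ^ (s + m) * (1 - t) ^ 2 <= P + A ^ 2).
    { replace (Rabs d * X ^ (s + m) * (1 - t) ^ 2) with (Rabs d * (1 - t) ^ 2 * X ^ (s + m)) by ring.
      rewrite E1.
      eapply Rle_trans.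
      - apply Rmult_le_compat_r; [lra|exact Hpt].
      - lra. }
    unfold D. nra. }
  assert (HlnX : 0 <= ln X) by (apply ln_nonneg; lra).
  assert (Hk : INR (k n) <= (Rabs C0 + 1) * (X ^ s * ln X)).
  { eapply Rle_trans; [apply HC0; lia|].
    apply Rmult_le_compat_r.
    - apply Rmult_le_pos; [apply pow_le; lra|lra].
    - pose proof (Rle_abs C0). lra. }
  set (y := INR (k n) * Rabs d).
  assert (Hy0 : 0 <= y) by (apply Rmult_le_pos; [apply pos_INR|apply Rabs_pos]).
  assert (Hy : y * X ^ m <= K * ln X).
  { unfold y.
    replace (INR (k n) * Rabs d * X ^ m) with (INR (k n) * (Rabs d * X ^ m)) by ring.
    eapply Rle_trans.
    - apply Rmult_le_compat_r; [apply Rmult_le_pos; [apply Rabs_pos|lra]|exact Hk].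
    - replace ((Rabs C0 + 1) * (X ^ s * ln X) * (Rabs d * X ^ m))
        with (((Rabs C0 + 1) * ln X) * (Rabs d * X ^ (s + m)))
        by (rewrite pow_add; ring).
      unfold K. replace ((Rabs C0 + 1) * D * ln X) with (((Rabs C0 + 1) * ln X) * D) by ring.
      apply Rmult_le_compat_l; [|exact Hd].
      pose proof (Rabs_pos C0). nra. }
  assert (HKl : K * ln X <= X).
  { pose proof (ln_sqrt_bound X ltac:(lra)) as Hl.
    assert (Hsq : 2 * K <= sqrt X).
    { rewrite <- (sqrt_pow2 (2 * K)) by lra. apply sqrt_le_1_alt. lra. }
    pose proof (sqrt_sqrt X ltac:(lra)).
    pose proof (sqrt_pos X).
    nra. }
  assert (HXm' : X <= X ^ m).
  { replace X with (X ^ 1) at 1 by ring. apply Rle_pow; lia || lra. }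
  assert (Hy1 : y <= 1) by nra.
  assert (Hyb : y <= K * ln X / X ^ m).
  { replace y with ((y * X ^ m) * / X ^ m) by (field; lra).
    unfold Rdiv. apply Rmult_le_compat_r; [left; apply Rinv_0_lt_compat; lra|exact Hy]. }
  assert (He : Rabs ((1 + d) ^ k n - 1) <= 3 * y).
  { eapply Rle_trans; [apply pow_err|].
    fold y.
    assert (H1 : (1 + Rabs d) ^ k n <= exp y) by (apply pow_exp, Rabs_pos).
    assert (H2 : exp y <= 3).
    { eapply Rle_trans; [|apply exp_le_3].
      destruct Hy1 as [Hlt|Heq]; [left; apply exp_increasing; exact Hlt| rewrite Heq; lra]. }
    assert (0 <= (1 + Rabs d) ^ k n) by (apply pow_le; pose proof (Rabs_pos d); lra).
    nra. }
  eapply Rle_trans; [exact He|].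
  replace (3 * K * (ln X / X ^ m)) with (3 * (K * ln X / X ^ m)) by (unfold Rdiv; ring).
  lra.
Qed.
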